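(* There exist a meromorphic function $f:\mathbb{D}\to\mathbb{P}$ of bounded Nevanlinna characteristic (i.e. $\sup_{r<1}T(f;r)<\infty$) and $\theta\in\mathbb{R}$ such that, with $\gamma(t)=\tanh(\frac t2)e^{i\theta}$ and $L_S(\rho_0)=\int_0^{\rho_0}\|f'(\gamma(t))\|_{H\to S}\,dt$, one has $L_S(\rho_0)/\rho_0\to\infty$ as $\rho_0\to\infty$; in particular $L_S(\rho_0)\neq O(\rho_0)$.
   Context: $\mathbb{D}=\{|z|<1\}$ carries the hyperbolic metric with density $\lambda_H(z)=2/(1-|z|^2)$; $\mathbb{P}=\mathbb{C}\cup\{\infty\}$ carries the spherical metric with density $\lambda_S(w)=2/(1+|w|^2)$; $\|f'(z)\|_{H\to S}=\frac{2|f'(z)|}{1+|f(z)|^2}\cdot\frac{1-|z|^2}{2}$ (extended continuously at poles). The Nevanlinna characteristic is $T(f;r)=\int_0^r S(f;s)\frac{ds}{s}$ with $S(f;s)=\frac{1}{4\pi}\int_{|z|<s}|f'(z)|^2\lambda_S(f(z))^2\,dx\,dy$. *)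

(* Defs.v *)
From Stdlib Require Import Reals Lra ClassicalEpsilon.
Open Scope R_scope.

Definition CC := (R * R)%type.
Definition Cadd (z w : CC) : CC := (fst z + fst w, snd z + snd w).
Definition Csub (z w : CC) : CC := (fst z - fst w, snd z - snd w).
Definition Cmul (z w : CC) : CC :=
  (fst z * fst w - snd z * snd w, fst z * snd w + snd z * fst w).
Definition Cnorm2 (z : CC) : R := fst z * fst z + snd z * snd z.
Definition Cabs (z : CC) : R := sqrt (Cnorm2 z).
Definition Cinv (z : CC) : CC := (fst z / Cnorm2 z, - snd z / Cnorm2 z).
Definition C0 : CC := (0, 0).

Definition in_disk (z : CC) : Prop := Cabs z < 1.
Definition in_ball (c : CC) (r : R) (z : CC) : Prop := Cabs (Csub z c) < r.

Definition is_cderiv (g : CC -> CC) (z d : CC) : Prop :=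
  forall eps, 0 < eps -> exists delta, 0 < delta /\
    forall h : CC, 0 < Cabs h < delta ->
      Cabs (Csub (Csub (g (Cadd z h)) (g z)) (Cmul d h)) <= eps * Cabs h.

(** Riemann sphere P = CC ∪ {∞}: [Some w] is the finite point w, [None] is ∞ *)
Definition Csph := option CC.
Definition recip (w : Csph) : Csph :=
  match w with
  | None => Some C0
  | Some v => if Req_EM_T (Cnorm2 v) 0 then None else Some (Cinv v)
  end.

Definition holo_on (F : CC -> Csph) (U : CC -> Prop) : Prop :=
  exists g : CC -> CC, (forall z, U z -> F z = Some (g z)) /\
    (forall z, U z -> exists d, is_cderiv g z d).

Definition meromorphic_on_disk (f : CC -> Csph) : Prop :=
  (forall z0, in_disk z0 -> exists r, 0 < r /\
     (forall z, in_ball z0 r z -> in_disk z) /\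
     (holo_on f (in_ball z0 r) \/ holo_on (fun z => recip (f z)) (in_ball z0 r)))
  /\ (exists z0, in_disk z0 /\ f z0 <> None).

(** v is the spherical derivative 2|f'(z)|/(1+|f(z)|^2) of f at z,
    extended at poles via 1/f (where it equals 2|(1/f)'(z)|). *)
Definition sph_deriv (f : CC -> Csph) (z : CC) (v : R) : Prop :=
  (exists r g d, 0 < r /\ (forall u, in_ball z r u -> f u = Some (g u)) /\
     is_cderiv g z d /\ v = 2 * Cabs d / (1 + Cnorm2 (g z)))
  \/
  (f z = None /\ exists r g d, 0 < r /\
     (forall u, in_ball z r u -> recip (f u) = Some (g u)) /\
     is_cderiv g z d /\ v = 2 * Cabs d / (1 + Cnorm2 (g z))).

Definition normHS (fs : CC -> R) (z : CC) : R := fs z * (1 - Cnorm2 z) / 2.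

Definition RI (h : R -> R) (a b : R) : R :=
  match excluded_middle_informative (inhabited (Riemann_integrable h a b)) with
  | left H => RiemannInt (epsilon H (fun _ => True))
  | right _ => 0
  end.

Definition disk_integral (h : CC -> R) (s : R) : R :=
  RI (fun x => RI (fun y => h (x, y)) (- sqrt (s * s - x * x)) (sqrt (s * s - x * x)))
     (- s) s.

(** S(f;s) = (1/4π) ∫_{|z|<s} |f'|^2 λ_S(f)^2 dxdy = (1/4π) ∫ (f^#)^2 *)
Definition S_char (fs : CC -> R) (s : R) : R :=
  / (4 * PI) * disk_integral (fun z => fs z * fs z) s.

Definition T_char (fs : CC -> R) (r : R) : R :=
  RI (fun s => S_char fs s / s) 0 r.

Definition gamma (theta t : R) : CC :=
  (tanh (t / 2) * cos theta, tanh (t / 2) * sin theta).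

Definition L_S (fs : CC -> R) (theta rho0 : R) : R :=
  RI (fun t => normHS fs (gamma theta t)) 0 rho0.

(* Main.v *)
Require Import Defs.
From Stdlib Require Import Reals ClassicalEpsilon Lra Psatz.
Open Scope R_scope.

Lemma my_FTC (f F : R -> R) (a b : R) (pr : Riemann_integrable f a b) :
  a <= b -> (forall x, a <= x <= b -> continuity_pt f x) ->
  (forall x, a <= x <= b -> derivable_pt_lim F x (f x)) ->
  RiemannInt pr = F b - F a.
Proof.
  intros Hab Hc Hd.
  rewrite (RiemannInt_P20 Hab (FTC_P1 Hab Hc) pr).
  assert (H1 := RiemannInt_P29 Hab Hc).
  assert (H2 : antiderivative f F a b).
  { split; [|exact Hab]. intros x Hx.
    exists (exist _ (f x) (Hd x Hx)). reflexivity. }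
  destruct (antiderivative_Ucte f _ _ _ _ H1 H2) as [C HC].
  rewrite (HC b), (HC a); [ring|lra|lra].
Qed.

Lemma RI_le (h g : R -> R) (a b : R) (pr : Riemann_integrable g a b) :
  a <= b -> (forall x, a < x < b -> h x <= g x) -> 0 <= RiemannInt pr ->
  RI h a b <= RiemannInt pr.
Proof.
  intros Hab Hle H0. unfold RI.
  destruct excluded_middle_informative as [H|H]; [|exact H0].
  apply RiemannInt_P19; assumption.
Qed.

Lemma RI_ge (h g : R -> R) (a b : R) (prh : Riemann_integrable h a b)
  (pr : Riemann_integrable g a b) :
  a <= b -> (forall x, a < x < b -> g x <= h x) ->
  RiemannInt pr <= RI h a b.
Proof.
  intros Hab Hle. unfold RI.
  destruct excluded_middle_informative as [H|H].
  - apply RiemannInt_P19; assumption.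
  - exfalso; apply H; exact (inhabits prh).
Qed.

Lemma RInt_nonneg (g : R -> R) a b (pr : Riemann_integrable g a b) :
  a <= b -> (forall x, a < x < b -> 0 <= g x) -> 0 <= RiemannInt pr.
Proof.
  intros Hab H.
  assert (H1 := RiemannInt_P19 (RiemannInt_P14 a b 0) pr Hab).
  rewrite RiemannInt_P15 in H1. replace 0 with (0 * (b - a)) by ring.
  apply H1. intros x Hx. unfold fct_cte. apply H; auto.
Qed.

Lemma CC_eta (z : CC) : z = (fst z, snd z).
Proof. destruct z; reflexivity. Qed.

Lemma Cnorm2_nonneg z : 0 <= Cnorm2 z.
Proof. unfold Cnorm2; nra. Qed.

Lemma Cabs_nonneg z : 0 <= Cabs z.
Proof. apply sqrt_pos. Qed.

Lemma Cabs_sq z : Cabs z * Cabs z = Cnorm2 z.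
Proof. unfold Cabs; apply sqrt_sqrt, Cnorm2_nonneg. Qed.

Lemma Cnorm2_mul u v : Cnorm2 (Cmul u v) = Cnorm2 u * Cnorm2 v.
Proof. unfold Cnorm2, Cmul; simpl; ring. Qed.

Lemma Cabs_mul u v : Cabs (Cmul u v) = Cabs u * Cabs v.
Proof. unfold Cabs; rewrite Cnorm2_mul; apply sqrt_mult; apply Cnorm2_nonneg. Qed.

Lemma Rabs_le_sqrt a b : Rabs a <= sqrt (a * a + b * b).
Proof.
  rewrite <- sqrt_Rsqr_abs. apply sqrt_le_1_alt. unfold Rsqr; nra.
Qed.

Lemma fst_le_Cabs z : Rabs (fst z) <= Cabs z.
Proof. apply Rabs_le_sqrt. Qed.

Lemma snd_le_Cabs z : Rabs (snd z) <= Cabs z.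
Proof. unfold Cabs, Cnorm2. rewrite Rplus_comm. apply Rabs_le_sqrt. Qed.

Lemma Cabs_le_sum z : Cabs z <= Rabs (fst z) + Rabs (snd z).
Proof.
  unfold Cabs, Cnorm2.
  rewrite <- (sqrt_square (Rabs (fst z) + Rabs (snd z))) by
    (pose proof (Rabs_pos (fst z)); pose proof (Rabs_pos (snd z)); lra).
  apply sqrt_le_1_alt.
  pose proof (Rabs_pos (fst z)); pose proof (Rabs_pos (snd z)).
  assert (Rabs (fst z) * Rabs (fst z) = fst z * fst z) by
    (rewrite <- Rabs_mult; apply Rabs_pos_eq; nra).
  assert (Rabs (snd z) * Rabs (snd z) = snd z * snd z) by
    (rewrite <- Rabs_mult; apply Rabs_pos_eq; nra).
  nra.
Qed.

Lemma Cnorm2_zero z : Cnorm2 z = 0 -> z = C0.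
Proof.
  destruct z as [a b]; unfold Cnorm2, C0; simpl; intros H.
  assert (a = 0) by nra. assert (b = 0) by nra. subst; reflexivity.
Qed.

Lemma Cabs_pos_of_re z : 0 < fst z -> Cnorm2 z <> 0.
Proof. destruct z as [a b]; unfold Cnorm2; simpl; intros; nra. Qed.

Definition rc (u : CC -> R) (z : CC) : Prop :=
  forall e, 0 < e -> exists d, 0 < d /\
    forall w, Cabs (Csub w z) < d -> Rabs (u w - u z) < e.

Lemma rc_ext u v z : (forall w, u w = v w) -> rc u z -> rc v z.
Proof.
  intros E H e He. destruct (H e He) as [d [Hd H1]]. exists d; split; auto.
  intros w Hw. rewrite <- !E. auto.
Qed.

Lemma rc_const c z : rc (fun _ => c) z.
Proof. intros e He; exists 1; split; [lra|]. intros; rewrite Rminus_diag, Rabs_R0; auto. Qed.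

Lemma rc_fst z : rc (fun w => fst w) z.
Proof.
  intros e He; exists e; split; auto. intros w Hw.
  eapply Rle_lt_trans; [|exact Hw]. apply (fst_le_Cabs (Csub w z)).
Qed.

Lemma rc_snd z : rc (fun w => snd w) z.
Proof.
  intros e He; exists e; split; auto. intros w Hw.
  eapply Rle_lt_trans; [|exact Hw]. apply (snd_le_Cabs (Csub w z)).
Qed.

Lemma rc_plus u v z : rc u z -> rc v z -> rc (fun w => u w + v w) z.
Proof.
  intros Hu Hv e He.
  destruct (Hu (e/2)) as [d1 [Hd1 H1]]; [lra|].
  destruct (Hv (e/2)) as [d2 [Hd2 H2]]; [lra|].
  exists (Rmin d1 d2); split; [apply Rmin_glb_lt; auto|].
  intros w Hw.
  assert (A1 := H1 w (Rlt_le_trans _ _ _ Hw (Rmin_l _ _))).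
  assert (A2 := H2 w (Rlt_le_trans _ _ _ Hw (Rmin_r _ _))).
  replace (u w + v w - (u z + v z)) with ((u w - u z) + (v w - v z)) by ring.
  eapply Rle_lt_trans; [apply Rabs_triang|]. lra.
Qed.

Lemma rc_comp (phi : R -> R) u z :
  continuity_pt phi (u z) -> rc u z -> rc (fun w => phi (u w)) z.
Proof.
  intros Hphi Hu e He.
  destruct (Hphi e He) as [a [Ha H1]].
  destruct (Hu a Ha) as [d [Hd H2]].
  exists d; split; auto. intros w Hw.
  destruct (Req_dec (u w) (u z)) as [E|E].
  - rewrite E, Rminus_diag, Rabs_R0; auto.
  - apply (H1 (u w)). split.
    + split; [exact I| auto].
    + apply H2; auto.
Qed.

Lemma rc_opp u z : rc u z -> rc (fun w => - u w) z.
Proof.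
  intros H. apply (rc_comp (fun t => - t)); auto.
  apply (continuity_pt_opp id). apply derivable_continuous_pt, derivable_pt_id.
Qed.

Lemma cpt_sq x : continuity_pt (fun t => t * t) x.
Proof.
  apply (continuity_pt_mult id id); apply derivable_continuous_pt, derivable_pt_id.
Qed.

Lemma cpt_scal c x : continuity_pt (fun t => c * t) x.
Proof.
  apply (continuity_pt_scal id); apply derivable_continuous_pt, derivable_pt_id.
Qed.

Lemma rc_mult u v z : rc u z -> rc v z -> rc (fun w => u w * v w) z.
Proof.
  intros Hu Hv.
  apply rc_ext with (fun w => / 4 * ((u w + v w) * (u w + v w) + - ((u w + - v w) * (u w + - v w)))).
  { intros; field. }
  apply (rc_comp (fun t => /4 * t)); [apply cpt_scal|].
  apply rc_plus.
  - apply (rc_comp (fun t => t * t)); [apply cpt_sq|]. apply rc_plus; auto.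
  - apply rc_opp. apply (rc_comp (fun t => t * t)); [apply cpt_sq|].
    apply rc_plus; auto. apply rc_opp; auto.
Qed.

Lemma rc_inv u z : u z <> 0 -> rc u z -> rc (fun w => / u w) z.
Proof.
  intros Hz H. apply (rc_comp (fun t => / t)); auto.
  apply (continuity_pt_inv id); auto. apply derivable_continuous_pt, derivable_pt_id.
Qed.

Lemma rc_sqrt u z : 0 <= u z -> rc u z -> rc (fun w => sqrt (u w)) z.
Proof. intros H0 H. apply (rc_comp sqrt); auto. apply continuity_pt_sqrt; auto. Qed.

Definition Ccont (F : CC -> CC) (z : CC) : Prop :=
  rc (fun w => fst (F w)) z /\ rc (fun w => snd (F w)) z.

Lemma Ccont_ball F z : Ccont F z ->
  forall e, 0 < e -> exists d, 0 < d /\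
    forall w, Cabs (Csub w z) < d -> Cabs (Csub (F w) (F z)) < e.
Proof.
  intros [H1 H2] e He.
  destruct (H1 (e/2)) as [d1 [Hd1 A1]]; [lra|].
  destruct (H2 (e/2)) as [d2 [Hd2 A2]]; [lra|].
  exists (Rmin d1 d2); split; [apply Rmin_glb_lt; auto|].
  intros w Hw.
  assert (B1 := A1 w (Rlt_le_trans _ _ _ Hw (Rmin_l _ _))).
  assert (B2 := A2 w (Rlt_le_trans _ _ _ Hw (Rmin_r _ _))).
  eapply Rle_lt_trans; [apply Cabs_le_sum|]. simpl. lra.
Qed.

Lemma rc_compC u F z : Ccont F z -> rc u (F z) -> rc (fun w => u (F w)) z.
Proof.
  intros HF Hu e He.
  destruct (Hu e He) as [d1 [Hd1 H1]].
  destruct (Ccont_ball F z HF d1 Hd1) as [d2 [Hd2 H2]].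
  exists d2; split; auto.
Qed.

Lemma Ccont_comp G F z : Ccont F z -> Ccont G (F z) -> Ccont (fun w => G (F w)) z.
Proof.
  intros HF [H1 H2]; split; apply (rc_compC (fun w => _ (G w))); auto.
Qed.

Lemma Ccont_const c z : Ccont (fun _ => c) z.
Proof. split; apply rc_const. Qed.

Lemma Ccont_id z : Ccont (fun w => w) z.
Proof. split; [apply rc_fst|apply rc_snd]. Qed.

Lemma Ccont_add F G z : Ccont F z -> Ccont G z -> Ccont (fun w => Cadd (F w) (G w)) z.
Proof. intros [A1 A2] [B1 B2]; split; simpl; apply rc_plus; auto. Qed.

Lemma Ccont_sub F G z : Ccont F z -> Ccont G z -> Ccont (fun w => Csub (F w) (G w)) z.
Proof. intros [A1 A2] [B1 B2]; split; simpl; apply rc_plus; auto; apply rc_opp; auto. Qed.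

Lemma Ccont_mul F G z : Ccont F z -> Ccont G z -> Ccont (fun w => Cmul (F w) (G w)) z.
Proof.
  intros [A1 A2] [B1 B2]; split; simpl.
  - apply rc_plus; [|apply rc_opp]; apply rc_mult; auto.
  - apply rc_plus; apply rc_mult; auto.
Qed.

Lemma Ccont_inv F z : Cnorm2 (F z) <> 0 -> Ccont F z -> Ccont (fun w => Cinv (F w)) z.
Proof.
  intros Hn [A1 A2].
  assert (Hc : rc (fun w => / Cnorm2 (F w)) z).
  { apply rc_inv; auto. unfold Cnorm2. apply rc_plus; apply rc_mult; auto. }
  split; simpl; unfold Rdiv.
  - apply rc_mult; auto.
  - apply rc_mult; auto. apply rc_opp; auto.
Qed.

Lemma rc_local u v z d : 0 < d -> (forall w, Cabs (Csub w z) < d -> u w = v w) ->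
  rc v z -> rc u z.
Proof.
  intros Hd E H e He. destruct (H e He) as [d1 [Hd1 H1]].
  exists (Rmin d d1); split; [apply Rmin_glb_lt; auto|].
  intros w Hw.
  assert (Ez : u z = v z).
  { apply E. unfold Csub. rewrite !Rminus_diag. unfold Cabs, Cnorm2; simpl.
    rewrite Rmult_0_l, Rplus_0_l, sqrt_0; auto. }
  rewrite Ez, E by (eapply Rlt_le_trans; [exact Hw| apply Rmin_l]).
  apply H1; eapply Rlt_le_trans; [exact Hw| apply Rmin_r].
Qed.

Lemma Ccont_local F G z d : 0 < d -> (forall w, Cabs (Csub w z) < d -> F w = G w) ->
  Ccont G z -> Ccont F z.
Proof.
  intros Hd E [A1 A2]; split;
  [apply (rc_local _ (fun w => fst (G w)) z d)|apply (rc_local _ (fun w => snd (G w)) z d)];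
  auto; intros w Hw; rewrite E; auto.
Qed.

Definition cara (g : CC -> CC) (z d : CC) : Prop :=
  exists del Phi, 0 < del /\
    (forall w, Cabs (Csub w z) < del -> Csub (g w) (g z) = Cmul (Phi w) (Csub w z)) /\
    Phi z = d /\ Ccont Phi z.

Lemma Csub_diag z : Csub z z = C0.
Proof. unfold Csub, C0; f_equal; ring. Qed.

Lemma Cabs_C0 : Cabs C0 = 0.
Proof. unfold Cabs, Cnorm2, C0; simpl. rewrite Rmult_0_l, Rplus_0_l; apply sqrt_0. Qed.

Lemma cara_cont g z d : cara g z d -> Ccont g z.
Proof.
  intros [del [Phi [Hd [E [_ HP]]]]].
  apply (Ccont_local _ (fun w => Cadd (g z) (Cmul (Phi w) (Csub w z))) z del Hd).
  - intros w Hw. rewrite <- E by auto. rewrite (CC_eta (g w)) at 1.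
    unfold Cadd, Csub; simpl; f_equal; ring.
  - apply Ccont_add; [apply Ccont_const|]. apply Ccont_mul; auto.
    apply Ccont_sub; [apply Ccont_id|apply Ccont_const].
Qed.

Lemma cara_deriv g z d : cara g z d -> is_cderiv g z d.
Proof.
  intros [del [Phi [Hd [E [HPz HP]]]]] eps He.
  destruct (Ccont_ball Phi z HP eps He) as [d1 [Hd1 H1]].
  exists (Rmin del d1); split; [apply Rmin_glb_lt; auto|].
  intros h [Hh0 Hh].
  assert (Ew : Csub (Cadd z h) z = h).
  { rewrite (CC_eta h) at 2. unfold Csub, Cadd; simpl; f_equal; ring. }
  assert (Hw : Cabs (Csub (Cadd z h) z) < Rmin del d1) by (rewrite Ew; auto).
  rewrite E by (eapply Rlt_le_trans; [exact Hw|apply Rmin_l]).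
  rewrite Ew.
  replace (Csub (Cmul (Phi (Cadd z h)) h) (Cmul d h)) with
    (Cmul (Csub (Phi (Cadd z h)) (Phi z)) h)
    by (rewrite HPz; unfold Cmul, Csub; simpl; f_equal; ring).
  rewrite Cabs_mul. apply Rmult_le_compat_r; [apply Cabs_nonneg|].
  left. apply H1. eapply Rlt_le_trans; [exact Hw|apply Rmin_r].
Qed.

Lemma cara_comp g f z df dg :
  cara f z df -> cara g (f z) dg -> cara (fun w => g (f w)) z (Cmul dg df).
Proof.
  intros Hf Hg.
  assert (Cf := cara_cont _ _ _ Hf).
  destruct Hf as [del1 [Phi [Hd1 [E1 [HP1 C1]]]]].
  destruct Hg as [del2 [Psi [Hd2 [E2 [HP2 C2]]]]].
  destruct (Ccont_ball f z Cf del2 Hd2) as [d3 [Hd3 H3]].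
  exists (Rmin del1 d3), (fun w => Cmul (Psi (f w)) (Phi w)).
  split; [apply Rmin_glb_lt; auto|].
  split; [|split].
  - intros w Hw.
    rewrite E2 by (apply H3; eapply Rlt_le_trans; [exact Hw|apply Rmin_r]).
    rewrite E1 by (eapply Rlt_le_trans; [exact Hw|apply Rmin_l]).
    unfold Cmul; simpl; f_equal; ring.
  - simpl. rewrite HP1, HP2; reflexivity.
  - apply Ccont_mul; auto. apply Ccont_comp; auto.
Qed.

Lemma cara_lin g a z : (forall w, Csub (g w) (g z) = Cmul a (Csub w z)) -> cara g z a.
Proof.
  intros H. exists 1, (fun _ => a). split; [lra|]. split; [|split].
  - intros; auto.
  - reflexivity.
  - apply Ccont_const.
Qed.

Definition Copp (z : CC) : CC := (- fst z, - snd z).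

Lemma Cinv_mul_cancel x y : Cnorm2 x <> 0 -> Cmul (Cinv x) (Cmul x y) = y.
Proof.
  destruct x as [a b], y as [c d]; unfold Cinv, Cmul; simpl; unfold Cnorm2 in *; simpl in *; intros H.
  f_equal; field; auto.
Qed.

Lemma cara_inv u : Cnorm2 u <> 0 -> cara Cinv u (Copp (Cmul (Cinv u) (Cinv u))).
Proof.
  intros Hu.
  assert (HA : 0 < Cabs u).
  { unfold Cabs. apply sqrt_lt_R0. pose proof (Cnorm2_nonneg u); lra. }
  exists (Cabs u), (fun w => Copp (Cmul (Cinv w) (Cinv u))).
  split; auto. split; [|split; [reflexivity|]].
  - intros w Hw.
    assert (Hw0 : Cnorm2 w <> 0).
    { intros Hn. apply Cnorm2_zero in Hn. subst w.
      assert (Cabs (Csub C0 u) = Cabs u).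
      { unfold Cabs, Cnorm2, Csub, C0; simpl. f_equal. ring. }
      lra. }
    revert Hu Hw0. destruct u as [a b], w as [c d].
    unfold Cinv, Cmul, Csub, Copp; simpl; unfold Cnorm2 in *; simpl in *; intros.
    f_equal; field; auto.
  - unfold Copp. split; simpl; apply rc_opp.
    + apply (Ccont_mul (fun w => Cinv w) (fun _ => Cinv u) u); [|apply Ccont_const].
      apply Ccont_inv; auto. apply Ccont_id.
    + apply (Ccont_mul (fun w => Cinv w) (fun _ => Cinv u) u); [|apply Ccont_const].
      apply Ccont_inv; auto. apply Ccont_id.
Qed.
Lemma F7 : INR (Factorial.fact 7) = 5040.
Proof. rewrite INR_IZR_INZ. reflexivity. Qed.
Lemma F5 : INR (Factorial.fact 5) = 120.
Proof. rewrite INR_IZR_INZ. reflexivity. Qed.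
Lemma F3 : INR (Factorial.fact 3) = 6.
Proof. rewrite INR_IZR_INZ. reflexivity. Qed.
Lemma F6 : INR (Factorial.fact 6) = 720.
Proof. rewrite INR_IZR_INZ. reflexivity. Qed.
Lemma F4 : INR (Factorial.fact 4) = 24.
Proof. rewrite INR_IZR_INZ. reflexivity. Qed.
Lemma F2 : INR (Factorial.fact 2) = 2.
Proof. rewrite INR_IZR_INZ. reflexivity. Qed.
Lemma F1 : INR (Factorial.fact 1) = 1.
Proof. reflexivity. Qed.
Lemma F0 : INR (Factorial.fact 0) = 1.
Proof. reflexivity. Qed.

Lemma sin_bd_pos b : 0 <= b <= 1/2 -> Rabs (sin b - b) <= b*b.
Proof.
  intros Hb.
  assert (HP := PI2_1).
  destruct (SIN b) as [H _]; [lra|lra|].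
  unfold sin_lb, sin_approx, sin_term in H. cbn [sum_f_R0 Nat.mul Nat.add] in H.
  rewrite F1, F3, F5, F7 in H.
  assert (sin b <= b).
  { destruct (Req_dec b 0) as [->|Hn]; [rewrite sin_0; lra|]. left; apply sin_lt_x; lra. }
  rewrite Rabs_left1 by lra.
  assert (E3 : b^3 = b*b*b) by ring. assert (E5 : b^5 = (b*b)*(b*b)*b) by ring.
  assert (E7 : b^7 = (b*b)*(b*b)*(b*b)*b) by ring.
  rewrite E3, E5, E7 in H.
  assert (0 <= b*b <= 1/4) by nra.
  assert (0 <= (b*b)*(b*b) <= 1/16) by nra.
  assert (0 <= (b*b)*(b*b)*(b*b) <= 1/64) by nra.
  simpl in H. nra.
Qed.

Lemma cos_bd b : Rabs b <= 1/2 -> 1 - b*b/2 <= cos b <= 1.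
Proof.
  intros Hb. assert (HP := PI2_1).
  split; [|apply COS_bound].
  assert (-(1/2) <= b <= 1/2) by (revert Hb; unfold Rabs; destruct Rcase_abs; lra).
  destruct (COS b) as [Hc _]; [lra|lra|].
  unfold cos_lb, cos_approx, cos_term in Hc. cbn [sum_f_R0 Nat.mul Nat.add] in Hc.
  rewrite F0, F2, F4, F6 in Hc. simpl in Hc.
  assert (0 <= b*b <= 1/4) by nra.
  assert (0 <= (b*b)*(b*b)*(1/24 - (b*b)/720)) by (apply Rmult_le_pos; nra).
  assert (E: b * (b * (b * (b * 1))) / 24 = (b*b)*(b*b)/24) by field.
  assert (E': b * (b * (b * (b * (b * (b * 1))))) / 720 = (b*b)*(b*b)*(b*b)/720) by field.
  rewrite E, E' in Hc. lra.
Qed.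

Lemma Rabs_bt x y : Rabs x <= y -> - y <= x <= y.
Proof. unfold Rabs; destruct Rcase_abs; lra. Qed.

Lemma Rabs_from_bt x y : - y <= x <= y -> Rabs x <= y.
Proof. unfold Rabs; destruct Rcase_abs; lra. Qed.

Lemma Rabs_sq_eq x : Rabs x * Rabs x = x * x.
Proof. unfold Rabs; destruct Rcase_abs; ring. Qed.

Lemma sin_bd b : Rabs b <= 1/2 -> Rabs (sin b - b) <= b*b.
Proof.
  intros Hb. apply Rabs_bt in Hb.
  destruct (Rle_dec 0 b).
  - apply sin_bd_pos; lra.
  - replace (sin b - b) with (- (sin (-b) - (-b))) by (rewrite sin_neg; ring).
    rewrite Rabs_Ropp. replace (b*b) with ((-b)*(-b)) by ring. apply sin_bd_pos; lra.
Qed.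

Lemma exp_bd a : Rabs a <= 1/2 -> 1 + a <= exp a <= 1 + a + 2*a*a.
Proof.
  intros Ha. apply Rabs_bt in Ha. split; [apply exp_ineq1_le|].
  assert (H1 := exp_ineq1_le (-a)).
  assert (H2 : exp a * exp (-a) = 1) by (rewrite <- exp_plus; replace (a + -a) with 0 by ring; apply exp_0).
  assert (H3 := exp_pos a).
  assert (0 <= a*a) by nra.
  assert ((1 + a + 2*a*a) * (1 - a) >= 1) by nra.
  nra.
Qed.

Definition csqrt (w : CC) : CC :=
  (sqrt ((Cabs w + fst w) / 2), snd w / (2 * sqrt ((Cabs w + fst w) / 2))).

Lemma Cabs_ge_fst w : fst w <= Cabs w.
Proof. pose proof (fst_le_Cabs w). pose proof (Rle_abs (fst w)). lra. Qed.

Lemma csqrt_re_pos w : 0 < fst w -> 0 < fst (csqrt w).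
Proof.
  intros H. unfold csqrt; simpl. apply sqrt_lt_R0. pose proof (Cabs_ge_fst w). lra.
Qed.

Lemma csqrt_sq w : 0 < fst w -> Cmul (csqrt w) (csqrt w) = w.
Proof.
  intros H. pose proof (Cabs_ge_fst w) as Hm.
  pose proof (Cabs_sq w) as Hm2.
  rewrite (CC_eta w) at 3.
  unfold csqrt, Cmul; simpl.
  set (m := Cabs w) in *. set (p := (m + fst w) / 2).
  assert (Hp : 0 < p) by (unfold p; lra).
  assert (Hx : sqrt p * sqrt p = p) by (apply sqrt_sqrt; lra).
  assert (Hx0 : 0 < sqrt p) by (apply sqrt_lt_R0; lra).
  unfold Cnorm2 in Hm2.
  f_equal.
  - replace (snd w / (2 * sqrt p) * (snd w / (2 * sqrt p))) with
      (snd w * snd w / (4 * (sqrt p * sqrt p))) by (field; lra).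
    rewrite Hx. apply Rmult_eq_reg_r with (4 * p); [|lra].
    field_simplify; [|lra]. unfold p. nra.
  - field. lra.
Qed.

Lemma Cabs_csqrt w : 0 < fst w -> Cabs (csqrt w) * Cabs (csqrt w) = Cabs w.
Proof. intros H. rewrite <- Cabs_mul, csqrt_sq; auto. Qed.

Lemma Ccont_Cabs z : rc (fun w => Cabs w) z.
Proof.
  unfold Cabs. apply rc_sqrt; [apply Cnorm2_nonneg|].
  unfold Cnorm2. apply rc_plus; apply rc_mult; [apply rc_fst|apply rc_fst|apply rc_snd|apply rc_snd].
Qed.

Lemma Ccont_csqrt u : 0 < fst u -> Ccont csqrt u.
Proof.
  intros Hu. pose proof (Cabs_ge_fst u).
  assert (Hr : rc (fun w => (Cabs w + fst w) / 2) u).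
  { unfold Rdiv. apply rc_mult; [|apply rc_const]. apply rc_plus; [apply Ccont_Cabs|apply rc_fst]. }
  assert (Hs : rc (fun w => sqrt ((Cabs w + fst w) / 2)) u).
  { apply rc_sqrt; auto. lra. }
  split; unfold csqrt; simpl; auto.
  unfold Rdiv. apply rc_mult; [apply rc_snd|]. apply rc_inv.
  - assert (0 < sqrt ((Cabs u + fst u) / 2)) by (apply sqrt_lt_R0; lra). lra.
  - apply rc_mult; [apply rc_const|auto].
Qed.

Lemma cara_csqrt u : 0 < fst u -> cara csqrt u (Cinv (Cadd (csqrt u) (csqrt u))).
Proof.
  intros Hu.
  exists (fst u), (fun w => Cinv (Cadd (csqrt w) (csqrt u))).
  split; auto. split; [|split; [reflexivity|]].
  - intros w Hw.
    assert (Hw0 : 0 < fst w).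
    { pose proof (fst_le_Cabs (Csub w u)). simpl in H.
      pose proof (Rle_abs (- (fst w - fst u))). rewrite Rabs_Ropp in H0. lra. }
    pose proof (csqrt_sq w Hw0) as Ew. pose proof (csqrt_sq u Hu) as Eu.
    pose proof (csqrt_re_pos w Hw0). pose proof (csqrt_re_pos u Hu).
    set (sw := csqrt w) in *. set (su := csqrt u) in *.
    assert (E : Csub w u = Cmul (Cadd sw su) (Csub sw su)).
    { rewrite <- Ew, <- Eu at 1. unfold Csub, Cmul, Cadd; simpl; f_equal; ring. }
    rewrite E. rewrite Cinv_mul_cancel; auto.
    apply Cabs_pos_of_re. change (0 < fst sw + fst su); lra.
  - apply Ccont_inv.
    + apply Cabs_pos_of_re. pose proof (csqrt_re_pos u Hu). change (0 < fst (csqrt u) + fst (csqrt u)); lra.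
    + apply Ccont_add; [apply Ccont_csqrt; auto|apply Ccont_const].
Qed.

Definition cexp (w : CC) : CC := (exp (fst w) * cos (snd w), exp (fst w) * sin (snd w)).

Lemma cexp_add u v : cexp (Cadd u v) = Cmul (cexp u) (cexp v).
Proof.
  unfold cexp, Cadd, Cmul; simpl. rewrite exp_plus, cos_plus, sin_plus. f_equal; ring.
Qed.

Lemma cexp_bound h : Cabs h <= 1/2 ->
  Cabs (Csub (Csub (cexp h) (1, 0)) h) <= 4 * Cnorm2 h.
Proof.
  intros Hh.
  assert (Ha : Rabs (fst h) <= 1/2) by (pose proof (fst_le_Cabs h); lra).
  assert (Hb : Rabs (snd h) <= 1/2) by (pose proof (snd_le_Cabs h); lra).
  eapply Rle_trans; [apply Cabs_le_sum|].
  unfold cexp, Csub, Cnorm2; simpl.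
  destruct h as [a b]; simpl in *.
  destruct (exp_bd a Ha) as [E1 E2].
  destruct (cos_bd b Hb) as [C1 C2].
  pose proof (sin_bd b Hb) as S1.
  pose proof (exp_pos a) as E0.
  apply Rabs_bt in Ha. apply Rabs_bt in Hb.
  set (E := exp a) in *. set (C := cos b) in *. set (S := sin b) in *.
  assert (R1 : Rabs (E * C - 1 - a) <= 2*a*a + b*b).
  { apply Rabs_from_bt.
    assert (0 <= 1 - C <= b*b/2) by lra.
    assert (E <= 2) by nra.
    assert (0 <= E * (1 - C) <= b*b).
    { split; [apply Rmult_le_pos; lra|].
      apply Rle_trans with (2 * (1 - C)); [apply Rmult_le_compat_r; lra|lra]. }
    assert (0 <= a*a) by nra. split; nra. }
  assert (R2 : Rabs (E * S - 0 - b) <= 3/2*a*a + 5/2*b*b).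
  { replace (E * S - 0 - b) with ((E - 1) * S + (S - b)) by ring.
    eapply Rle_trans; [apply Rabs_triang|]. rewrite Rabs_mult.
    assert (A1 : Rabs (E - 1) <= 2 * Rabs a).
    { apply Rabs_from_bt. unfold Rabs; destruct Rcase_abs; split; nra. }
    assert (A2 : Rabs S <= 3/2 * Rabs b).
    { apply Rabs_bt in S1. apply Rabs_from_bt.
      unfold Rabs; destruct Rcase_abs; split; nra. }
    assert (A3 : Rabs a * Rabs b <= (a*a + b*b)/2).
    { pose proof (Rabs_sq_eq a); pose proof (Rabs_sq_eq b).
      pose proof (Rle_0_sqr (Rabs a - Rabs b)). unfold Rsqr in *. nra. }
    pose proof (Rabs_pos (E-1)). pose proof (Rabs_pos S). pose proof (Rabs_pos a).
    pose proof (Rabs_pos b).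
    assert (Rabs (E - 1) * Rabs S <= 3 * (Rabs a * Rabs b)).
    { apply Rle_trans with ((2 * Rabs a) * (3/2 * Rabs b)); [|lra].
      apply Rmult_le_compat; auto. }
    lra. }
  lra.
Qed.

Definition E1 (h : CC) : CC :=
  if Req_EM_T (Cnorm2 h) 0 then ((1, 0) : CC) else Cmul (Csub (cexp h) (1, 0)) (Cinv h).

Lemma cexp_C0 : cexp C0 = (1, 0).
Proof. unfold cexp, C0; simpl. rewrite exp_0, cos_0, sin_0. f_equal; ring. Qed.

Lemma E1_id h : Csub (cexp h) (1, 0) = Cmul (E1 h) h.
Proof.
  unfold E1; destruct Req_EM_T as [e|n].
  - apply Cnorm2_zero in e. subst. rewrite cexp_C0. unfold Csub, Cmul, C0; simpl; f_equal; ring.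
  - revert n. generalize (Csub (cexp h) (1, 0)). intros [c d]. destruct h as [a b].
    unfold Cmul, Cinv; simpl; unfold Cnorm2; simpl; intros n. f_equal; field; auto.
Qed.

Lemma E1_C0 : E1 C0 = (1, 0).
Proof.
  unfold E1; destruct Req_EM_T as [e|n]; [reflexivity|].
  exfalso; apply n; unfold Cnorm2, C0; simpl; ring.
Qed.

Lemma Cabs_Cinv x : Cnorm2 x <> 0 -> Cabs (Cinv x) = / Cabs x.
Proof.
  intros H. unfold Cabs. rewrite <- sqrt_inv. f_equal.
  revert H; destruct x as [a b]; unfold Cinv, Cnorm2; simpl; intros H. field; auto.
Qed.

Lemma Ccont_of_ball F z :
  (forall e, 0 < e -> exists d, 0 < d /\
    forall w, Cabs (Csub w z) < d -> Cabs (Csub (F w) (F z)) < e) -> Ccont F z.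
Proof.
  intros H. split; intros e He; destruct (H e He) as [d [Hd H1]]; exists d; split; auto;
  intros w Hw; specialize (H1 w Hw).
  - eapply Rle_lt_trans; [|exact H1]. apply (fst_le_Cabs (Csub (F w) (F z))).
  - eapply Rle_lt_trans; [|exact H1]. apply (snd_le_Cabs (Csub (F w) (F z))).
Qed.

Lemma Ccont_E1 : Ccont E1 C0.
Proof.
  apply Ccont_of_ball. intros e He.
  exists (Rmin (1/2) (e/4)); split; [apply Rmin_glb_lt; lra|].
  intros w Hw.
  assert (Ew : Csub w C0 = w) by (rewrite (CC_eta w) at 2; unfold Csub, C0; simpl; f_equal; ring).
  rewrite Ew in Hw. rewrite E1_C0.
  assert (Hw1 : Cabs w < 1/2) by (eapply Rlt_le_trans; [exact Hw|apply Rmin_l]).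
  assert (Hw2 : Cabs w < e/4) by (eapply Rlt_le_trans; [exact Hw|apply Rmin_r]).
  destruct (Req_EM_T (Cnorm2 w) 0) as [Z|NZ].
  - unfold E1; destruct Req_EM_T; [|contradiction].
    replace (Csub (1, 0) (1, 0)) with C0 by (unfold Csub, C0; simpl; f_equal; ring).
    rewrite Cabs_C0; auto.
  - assert (E : Csub (E1 w) (1, 0) = Cmul (Csub (Csub (cexp w) (1, 0)) w) (Cinv w)).
    { unfold E1; destruct Req_EM_T; [contradiction|].
      revert NZ. generalize (Csub (cexp w) (1, 0)). intros [c d]. destruct w as [a b].
      unfold Cmul, Cinv, Csub; simpl; unfold Cnorm2; simpl; intros n0. f_equal; field; auto. }
    rewrite E, Cabs_mul, Cabs_Cinv by auto.
    assert (Hp : 0 < Cabs w).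
    { unfold Cabs; apply sqrt_lt_R0. pose proof (Cnorm2_nonneg w). lra. }
    pose proof (cexp_bound w ltac:(lra)) as B.
    rewrite <- Cabs_sq in B.
    apply Rle_lt_trans with (4 * (Cabs w * Cabs w) * / Cabs w).
    + apply Rmult_le_compat_r; auto. left; apply Rinv_0_lt_compat; auto.
    + replace (4 * (Cabs w * Cabs w) * / Cabs w) with (4 * Cabs w) by (field; lra). lra.
Qed.

Lemma cara_cexp z : cara cexp z (cexp z).
Proof.
  exists 1, (fun w => Cmul (cexp z) (E1 (Csub w z))).
  split; [lra|]. split; [|split].
  - intros w _.
    assert (Ew : w = Cadd z (Csub w z)) by
      (rewrite (CC_eta w) at 1; unfold Cadd, Csub; simpl; f_equal; ring).
    rewrite Ew at 1. rewrite cexp_add.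
    pose proof (E1_id (Csub w z)) as H.
    remember (Csub w z) as hh. remember (E1 hh) as Y. remember (cexp hh) as X.
    remember (cexp z) as G.
    destruct Y as [a b], X as [c d], hh as [e f], G as [g h].
    unfold Csub, Cmul in *; cbn [fst snd] in *.
    injection H; intros H1 H2. f_equal; nra.
  - simpl. rewrite Csub_diag, E1_C0. rewrite (CC_eta (cexp z)) at 2.
    unfold Cmul; simpl; f_equal; ring.
  - apply Ccont_mul; [apply Ccont_const|].
    apply Ccont_comp; [apply Ccont_sub; [apply Ccont_id|apply Ccont_const]|].
    rewrite Csub_diag. apply Ccont_E1.
Qed.

Lemma Cabs_triang u v : Cabs (Cadd u v) <= Cabs u + Cabs v.
Proof.
  pose proof (Cabs_nonneg u). pose proof (Cabs_nonneg v).
  unfold Cabs at 1.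
  rewrite <- (sqrt_square (Cabs u + Cabs v)) by lra.
  apply sqrt_le_1_alt.
  pose proof (Cabs_sq u). pose proof (Cabs_sq v).
  assert (Hd : fst u * fst v + snd u * snd v <= Cabs u * Cabs v).
  { destruct (Rle_dec (fst u * fst v + snd u * snd v) 0) as [Hle|Hgt]; [nra|].
    apply Rsqr_incr_0_var; [|apply Rmult_le_pos; auto].
    unfold Rsqr. replace (Cabs u * Cabs v * (Cabs u * Cabs v)) with
      ((Cabs u * Cabs u) * (Cabs v * Cabs v)) by ring.
    rewrite H1, H2. unfold Cnorm2.
    pose proof (Rle_0_sqr (fst u * snd v - snd u * fst v)). unfold Rsqr in *. nra. }
  unfold Cnorm2, Cadd in *; simpl. nra.
Qed.

Definition w1 (z : CC) : CC := Csub (1, 0) z.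
Definition hfun (z : CC) : CC := Cmul (0, -1) (Cinv (csqrt (csqrt (w1 z)))).
Definition Gf (z : CC) : CC := cexp (hfun z).
Definition Df (z : CC) : CC :=
  Cmul (cexp (hfun z))
   (Cmul (0, -1)
    (Cmul (Copp (Cmul (Cinv (csqrt (csqrt (w1 z)))) (Cinv (csqrt (csqrt (w1 z))))))
     (Cmul (Cinv (Cadd (csqrt (csqrt (w1 z))) (csqrt (csqrt (w1 z)))))
      (Cmul (Cinv (Cadd (csqrt (w1 z)) (csqrt (w1 z)))) (-1, 0))))).

Lemma cara_G z : fst z < 1 -> cara Gf z (Df z).
Proof.
  intros Hz.
  assert (P1 : 0 < fst (w1 z)) by (unfold w1, Csub; simpl; lra).
  assert (P2 := csqrt_re_pos _ P1).
  assert (P3 := csqrt_re_pos _ P2).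
  assert (H1 : cara w1 z (-1, 0)).
  { apply cara_lin. intros w. unfold w1, Csub, Cmul; simpl; f_equal; ring. }
  assert (H2 := cara_csqrt _ P1).
  assert (H12 := cara_comp _ _ _ _ _ H1 H2). simpl in H12.
  assert (H3 := cara_csqrt _ P2).
  assert (H123 := cara_comp _ _ _ _ _ H12 H3).
  assert (H4 := cara_inv _ (Cabs_pos_of_re _ P3)).
  assert (H1234 := cara_comp _ _ _ _ _ H123 H4).
  assert (H5 : forall u, cara (fun x => Cmul (0, -1) x) u (0, -1)).
  { intros u. apply cara_lin. intros w. unfold Csub, Cmul; simpl; f_equal; ring. }
  assert (H12345 := cara_comp _ _ _ _ _ H1234 (H5 _)).
  assert (H6 := cara_comp _ _ _ _ _ H12345 (cara_cexp _)).
  exact H6.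
Qed.

Lemma in_disk_fst z : in_disk z -> fst z < 1.
Proof. unfold in_disk. intros H. pose proof (Cabs_ge_fst z). lra. Qed.

Definition fF (z : CC) : Csph := Some (Gf z).
Definition fsF (z : CC) : R := 2 * Cabs (Df z) / (1 + Cnorm2 (Gf z)).

Lemma merom : meromorphic_on_disk fF.
Proof.
  split.
  - intros z0 Hz0. unfold in_disk in Hz0.
    exists (1 - Cabs z0). split; [lra|]. split.
    + intros z Hz. unfold in_ball, in_disk in *.
      assert (E : z = Cadd z0 (Csub z z0)) by
        (rewrite (CC_eta z) at 1; unfold Cadd, Csub; simpl; f_equal; ring).
      rewrite E. eapply Rle_lt_trans; [apply Cabs_triang|]. lra.
    + left. exists Gf. split; [intros; reflexivity|].
      intros z Hz. exists (Df z). apply cara_deriv, cara_G.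
      apply in_disk_fst. unfold in_ball in Hz. unfold in_disk.
      assert (E : z = Cadd z0 (Csub z z0)) by
        (rewrite (CC_eta z) at 1; unfold Cadd, Csub; simpl; f_equal; ring).
      rewrite E. eapply Rle_lt_trans; [apply Cabs_triang|]. lra.
  - exists C0. split; [unfold in_disk; rewrite Cabs_C0; lra|]. discriminate.
Qed.

Lemma sphF z : in_disk z -> sph_deriv fF z (fsF z).
Proof.
  intros Hz. left. exists 1, Gf, (Df z). split; [lra|]. split; [intros; reflexivity|].
  split; [apply cara_deriv, cara_G, in_disk_fst; auto|reflexivity].
Qed.

Lemma Cabs_const2 a b : a * a + b * b = 1 -> Cabs (a, b) = 1.
Proof. intros H. unfold Cabs, Cnorm2; simpl. rewrite H. apply sqrt_1. Qed.

Lemma Cabs_Copp x : Cabs (Copp x) = Cabs x.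
Proof. unfold Cabs, Cnorm2, Copp; simpl. f_equal; ring. Qed.

Lemma Cabs_double x : Cabs (Cadd x x) = 2 * Cabs x.
Proof.
  replace (Cadd x x) with (Cmul (2, 0) x) by (unfold Cmul, Cadd; simpl; f_equal; ring).
  rewrite Cabs_mul. f_equal. unfold Cabs, Cnorm2; simpl.
  replace (2 * 2 + 0 * 0) with (2 * 2) by ring. apply sqrt_square; lra.
Qed.

Lemma Cabs_cexp h : Cabs (cexp h) = exp (fst h).
Proof.
  unfold Cabs, Cnorm2, cexp; simpl.
  replace (exp (fst h) * cos (snd h) * (exp (fst h) * cos (snd h)) +
           exp (fst h) * sin (snd h) * (exp (fst h) * sin (snd h)))
    with (exp (fst h) * exp (fst h) * (Rsqr (sin (snd h)) + Rsqr (cos (snd h))))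
    by (unfold Rsqr; ring).
  rewrite sin2_cos2, Rmult_1_r. apply sqrt_square. left; apply exp_pos.
Qed.

Definition a2 (z : CC) := csqrt (w1 z).
Definition a3 (z : CC) := csqrt (a2 z).
Definition hb (z : CC) : R := / (4 * (Cabs (a3 z) * Cabs (a3 z) * Cabs (a3 z)) * Cabs (a2 z)).

Lemma pos_facts z : fst z < 1 ->
  0 < fst (w1 z) /\ 0 < fst (a2 z) /\ 0 < fst (a3 z) /\
  0 < Cabs (a2 z) /\ 0 < Cabs (a3 z) /\
  Cabs (a3 z) * Cabs (a3 z) = Cabs (a2 z) /\ Cabs (a2 z) * Cabs (a2 z) = Cabs (w1 z).
Proof.
  intros Hz.
  assert (P1 : 0 < fst (w1 z)) by (unfold w1, Csub; simpl; lra).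
  assert (P2 := csqrt_re_pos _ P1).
  assert (P3 := csqrt_re_pos _ P2).
  fold (a2 z) in P2, P3. fold (a3 z) in P3.
  repeat split; auto.
  - pose proof (Cabs_ge_fst (a2 z)); lra.
  - pose proof (Cabs_ge_fst (a3 z)); lra.
  - apply Cabs_csqrt; auto.
  - apply Cabs_csqrt; auto.
Qed.

Lemma Df_abs z : fst z < 1 -> Cabs (Df z) = Cabs (Gf z) * hb z.
Proof.
  intros Hz. destruct (pos_facts z Hz) as [P1 [P2 [P3 [Q2 [Q3 [E3 E2]]]]]].
  unfold Df, Gf, hb. fold (a2 z). fold (a3 z).
  rewrite !Cabs_mul, Cabs_Copp, Cabs_mul.
  rewrite !Cabs_Cinv.
  - rewrite !Cabs_double.
    rewrite (Cabs_const2 0 (-1)) by ring. rewrite (Cabs_const2 (-1) 0) by ring.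
    field. lra.
  - apply Cabs_pos_of_re. change (0 < fst (a2 z) + fst (a2 z)). lra.
  - apply Cabs_pos_of_re. change (0 < fst (a3 z) + fst (a3 z)). lra.
  - apply Cabs_pos_of_re; auto.
Qed.

Lemma fs_le_hb z : fst z < 1 -> 0 <= fsF z <= hb z.
Proof.
  intros Hz. unfold fsF. rewrite Df_abs by auto. rewrite <- Cabs_sq.
  destruct (pos_facts z Hz) as [P1 [P2 [P3 [Q2 [Q3 [E3 E2]]]]]].
  assert (Hh : 0 < hb z).
  { unfold hb. apply Rinv_0_lt_compat. repeat apply Rmult_lt_0_compat; lra. }
  pose proof (Cabs_nonneg (Gf z)).
  set (g := Cabs (Gf z)) in *.
  split.
  - apply Rmult_le_pos; [|left; apply Rinv_0_lt_compat; nra].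
    apply Rmult_le_pos; [lra|apply Rmult_le_pos; lra].
  - unfold Rdiv. apply Rmult_le_reg_r with (1 + g * g); [nra|].
    rewrite Rmult_assoc, Rinv_l by nra.
    clearbody g.
    assert (0 <= hb z * ((g - 1) * (g - 1))) by (apply Rmult_le_pos; [lra|apply Rle_0_sqr]).
    lra.
Qed.

Lemma fs_sq_bound z : in_disk z ->
  fsF z * fsF z <= / (16 * ((1 - fst z) * (1 - fst z) + snd z * snd z) * sqrt (1 - fst z)).
Proof.
  intros Hd. assert (Hz := in_disk_fst z Hd).
  destruct (pos_facts z Hz) as [P1 [P2 [P3 [Q2 [Q3 [E3 E2]]]]]].
  destruct (fs_le_hb z Hz) as [F0 F1].
  assert (Hh : 0 < hb z).
  { unfold hb. apply Rinv_0_lt_compat. repeat apply Rmult_lt_0_compat; lra. }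
  assert (HA : Cabs (w1 z) * Cabs (w1 z) = (1 - fst z) * (1 - fst z) + snd z * snd z).
  { rewrite Cabs_sq. unfold w1, Csub, Cnorm2; simpl. ring. }
  assert (Hq : sqrt (1 - fst z) <= Cabs (a2 z)).
  { rewrite <- (sqrt_square (Cabs (a2 z))) by lra. rewrite E2. apply sqrt_le_1_alt.
    pose proof (Cabs_ge_fst (w1 z)).
    assert (fst (w1 z) = 1 - fst z) by (unfold w1, Csub; simpl; ring). lra. }
  assert (Hs : 0 < sqrt (1 - fst z)) by (apply sqrt_lt_R0; lra).
  apply Rle_trans with (hb z * hb z); [apply Rmult_le_compat; lra|].
  assert (Eh : hb z * hb z = / (16 * (Cabs (w1 z) * Cabs (w1 z)) * Cabs (a2 z))).
  { unfold hb. rewrite <- E2, <- E3. field. lra. }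
  rewrite Eh, HA. apply Rinv_le_contravar.
  - apply Rmult_lt_0_compat; [|lra]. rewrite <- HA.
    assert (0 < Cabs (w1 z)) by nra. nra.
  - apply Rmult_le_compat_l; [|lra]. rewrite <- HA. nra.
Qed.

Lemma csqrt_real w : snd w = 0 -> snd (csqrt w) = 0.
Proof. intros H. unfold csqrt; simpl. rewrite H. unfold Rdiv; ring. Qed.

Lemma fs_radius z : snd z = 0 -> fst z < 1 ->
  fsF z = / (4 * (1 - fst z) * sqrt (sqrt (1 - fst z))).
Proof.
  intros Hy Hz.
  destruct (pos_facts z Hz) as [P1 [P2 [P3 [Q2 [Q3 [E3 E2]]]]]].
  assert (G1 : Cabs (Gf z) = 1).
  { unfold Gf. rewrite Cabs_cexp.
    assert (S1 : snd (w1 z) = 0) by (unfold w1, Csub; simpl; lra).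
    assert (S3 : snd (a3 z) = 0) by (unfold a3, a2; apply csqrt_real, csqrt_real; auto).
    unfold hfun. fold (a2 z). fold (a3 z).
    unfold Cmul, Cinv; cbn [fst snd]. rewrite S3. unfold Rdiv.
    replace (0 * (fst (a3 z) * / Cnorm2 (a3 z)) - -1 * (- 0 * / Cnorm2 (a3 z))) with 0 by ring.
    apply exp_0. }
  unfold fsF. rewrite Df_abs by auto. rewrite <- Cabs_sq, G1.
  assert (A1 : Cabs (w1 z) = 1 - fst z).
  { unfold Cabs, w1, Csub, Cnorm2; simpl. rewrite Hy.
    replace ((1 - fst z) * (1 - fst z) + (0 - 0) * (0 - 0)) with ((1 - fst z) * (1 - fst z)) by ring.
    apply sqrt_square; lra. }
  assert (A2 : Cabs (a2 z) = sqrt (1 - fst z)).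
  { rewrite <- A1, <- E2. rewrite sqrt_square; lra. }
  assert (A3 : Cabs (a3 z) = sqrt (sqrt (1 - fst z))).
  { rewrite <- A2, <- E3. rewrite sqrt_square; lra. }
  unfold hb. rewrite A2, A3.
  assert (B2 : sqrt (1 - fst z) * sqrt (1 - fst z) = 1 - fst z) by (apply sqrt_sqrt; lra).
  assert (B3 : sqrt (sqrt (1 - fst z)) * sqrt (sqrt (1 - fst z)) = sqrt (1 - fst z))
    by (apply sqrt_sqrt; apply sqrt_pos).
  assert (B4 : 0 < sqrt (sqrt (1 - fst z))) by (rewrite <- A3; auto).
  set (s3 := sqrt (sqrt (1 - fst z))) in *. set (s2 := sqrt (1 - fst z)) in *.
  clearbody s3 s2.
  replace (4 * (s3 * s3 * s3) * s2) with (4 * (s3 * (1 - fst z))) by (rewrite <- B2, <- B3; ring).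
  field. split; lra.
Qed.

Lemma dpl_val f x l l' : derivable_pt_lim f x l -> l = l' -> derivable_pt_lim f x l'.
Proof. intros H E; subst; auto. Qed.

Lemma dpl_mult f g x l1 l2 : derivable_pt_lim f x l1 -> derivable_pt_lim g x l2 ->
  derivable_pt_lim (fun y => f y * g y) x (l1 * g x + f x * l2).
Proof. intros; apply (derivable_pt_lim_mult f g); auto. Qed.

Lemma dpl_plus f g x l1 l2 : derivable_pt_lim f x l1 -> derivable_pt_lim g x l2 ->
  derivable_pt_lim (fun y => f y + g y) x (l1 + l2).
Proof. intros; apply (derivable_pt_lim_plus f g); auto. Qed.

Lemma dpl_minus f g x l1 l2 : derivable_pt_lim f x l1 -> derivable_pt_lim g x l2 ->
  derivable_pt_lim (fun y => f y - g y) x (l1 - l2).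
Proof. intros; apply (derivable_pt_lim_minus f g); auto. Qed.

Lemma dpl_const c x : derivable_pt_lim (fun _ => c) x 0.
Proof. apply (derivable_pt_lim_const c). Qed.

Lemma dpl_id x : derivable_pt_lim (fun y => y) x 1.
Proof. apply derivable_pt_lim_id. Qed.

Lemma dpl_comp f g x l1 l2 : derivable_pt_lim f x l1 -> derivable_pt_lim g (f x) l2 ->
  derivable_pt_lim (fun y => g (f y)) x (l2 * l1).
Proof. intros; apply (derivable_pt_lim_comp f g); auto. Qed.

Lemma dpl_inv f x l : derivable_pt_lim f x l -> f x <> 0 ->
  derivable_pt_lim (fun y => / f y) x (- l / (f x * f x)).
Proof.
  intros H na.
  set (pr := exist (fun l0 => derivable_pt_lim f x l0) l H : derivable_pt f x).
  assert (E := derive_pt_inv f x pr na).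
  apply (proj1 (derive_pt_eq _ _ _ (derivable_pt_inv f x na pr))).
  rewrite E. reflexivity.
Qed.

Lemma cpt_of_dpl f x l : derivable_pt_lim f x l -> continuity_pt f x.
Proof.
  intros H. apply derivable_continuous_pt. exists l; auto.
Qed.

Lemma dpl_sqrt1m x : x < 1 ->
  derivable_pt_lim (fun y => sqrt (1 - y)) x (- / (2 * sqrt (1 - x))).
Proof.
  intros Hx. eapply dpl_val.
  - apply (dpl_comp (fun y => 1 - y) sqrt).
    + apply dpl_minus; [apply dpl_const|apply dpl_id].
    + apply derivable_pt_lim_sqrt. lra.
  - cbv beta; ring.
Qed.

Lemma int_atan (a w : R) (pr : Riemann_integrable
    (fun y => / (16 * (a * a + y * y) * sqrt a)) (- w) w) :
  0 < a -> 0 <= w -> RiemannInt pr <= PI / (16 * a * sqrt a).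
Proof.
  intros Ha Hw.
  assert (Hs : 0 < sqrt a) by (apply sqrt_lt_R0; auto).
  rewrite (my_FTC _ (fun y => atan (y * / a) * / (16 * a * sqrt a))); [| lra | |].
  - destruct (atan_bound (w * / a)). destruct (atan_bound (- w * / a)).
    rewrite <- Rmult_minus_distr_r. unfold Rdiv.
    apply Rmult_le_compat_r; [left; apply Rinv_0_lt_compat; apply Rmult_lt_0_compat; lra|].
    lra.
  - intros y _.
    assert (D1 : derivable_pt_lim (fun y => 16 * (a * a + y * y) * sqrt a) y (2 * y * 16 * sqrt a)).
    { eapply dpl_val.
      + apply dpl_mult; [|apply dpl_const].
        apply dpl_mult; [apply dpl_const|]. apply dpl_plus; [apply dpl_const|].
        apply dpl_mult; apply dpl_id.
      + cbv beta; ring. }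
    assert (NZ : 16 * (a * a + y * y) * sqrt a <> 0).
    { apply Rgt_not_eq. apply Rmult_lt_0_compat; [|lra]. nra. }
    exact (cpt_of_dpl _ _ _ (dpl_inv _ _ _ D1 NZ)).
  - intros y _. eapply dpl_val.
    + apply dpl_mult; [|apply dpl_const].
      apply (dpl_comp (fun y => y * / a) atan).
      * apply dpl_mult; [apply dpl_id|apply dpl_const].
      * apply derivable_pt_lim_atan.
    + cbv beta. field. split; [lra|]. split; [|lra]. nra.
Qed.

Lemma cpt_mult f g x : continuity_pt f x -> continuity_pt g x -> continuity_pt (fun y => f y * g y) x.
Proof. intros; apply (continuity_pt_mult f g); auto. Qed.
Lemma cpt_plus f g x : continuity_pt f x -> continuity_pt g x -> continuity_pt (fun y => f y + g y) x.
Proof. intros; apply (continuity_pt_plus f g); auto. Qed.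
Lemma cpt_minus f g x : continuity_pt f x -> continuity_pt g x -> continuity_pt (fun y => f y - g y) x.
Proof. intros; apply (continuity_pt_minus f g); auto. Qed.
Lemma cpt_inv f x : continuity_pt f x -> f x <> 0 -> continuity_pt (fun y => / f y) x.
Proof. intros; apply (continuity_pt_inv f); auto. Qed.
Lemma cpt_const c x : continuity_pt (fun _ => c) x.
Proof. apply continuity_pt_const. intros a b; reflexivity. Qed.
Lemma cpt_id x : continuity_pt (fun y => y) x.
Proof. apply derivable_continuous_pt, derivable_pt_id. Qed.
Lemma cpt_comp f g x : continuity_pt f x -> continuity_pt g (f x) -> continuity_pt (fun y => g (f y)) x.
Proof. intros; apply (continuity_pt_comp f g); auto. Qed.
Lemma cpt_sqrt f x : continuity_pt f x -> 0 <= f x -> continuity_pt (fun y => sqrt (f y)) x.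
Proof. intros. apply (cpt_comp f sqrt); auto. apply continuity_pt_sqrt; auto. Qed.

Lemma cpt_sqrt1m x : x < 1 -> continuity_pt (fun y => sqrt (1 - y)) x.
Proof. intros. apply cpt_sqrt; [apply cpt_minus; [apply cpt_const|apply cpt_id]|lra]. Qed.

Lemma int_outer (s : R)
  (pr : Riemann_integrable (fun x => PI / (16 * (1 - x) * sqrt (1 - x))) (- s) s) :
  0 < s < 1 -> RiemannInt pr <= PI * s / (4 * sqrt (1 - s)) /\ 0 <= RiemannInt pr.
Proof.
  intros Hs.
  assert (HPI := PI_RGT_0).
  rewrite (my_FTC _ (fun x => PI * / (8 * sqrt (1 - x)))); [| lra | |].
  - replace (1 - - s) with (1 + s) by ring.
    assert (Hp : 0 < sqrt (1 - s)) by (apply sqrt_lt_R0; lra).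
    assert (Hq : 1 <= sqrt (1 + s)).
    { apply Rle_trans with (sqrt 1); [rewrite sqrt_1; lra|apply sqrt_le_1_alt; lra]. }
    assert (Ep : sqrt (1 - s) * sqrt (1 - s) = 1 - s) by (apply sqrt_sqrt; lra).
    assert (Eq : sqrt (1 + s) * sqrt (1 + s) = 1 + s) by (apply sqrt_sqrt; lra).
    set (p := sqrt (1 - s)) in *. set (q := sqrt (1 + s)) in *. clearbody p q.
    assert (Hqp : p <= q) by nra.
    assert (Hd : q - p <= 2 * s * q) by nra.
    split.
    + replace (PI * / (8 * p) - PI * / (8 * q)) with (PI / 8 * ((q - p) / (p * q))) by (field; lra).
      replace (PI * s / (4 * p)) with (PI / 8 * ((2 * s * q) / (p * q))) by (field; lra).
      apply Rmult_le_compat_l; [lra|]. unfold Rdiv.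
      apply Rmult_le_compat_r; [left; apply Rinv_0_lt_compat; nra|lra].
    + replace (PI * / (8 * p) - PI * / (8 * q)) with (PI / 8 * ((q - p) / (p * q))) by (field; lra).
      apply Rmult_le_pos; [lra|]. unfold Rdiv. apply Rmult_le_pos; [lra|].
      left; apply Rinv_0_lt_compat; nra.
  - intros x Hx. unfold Rdiv. apply cpt_mult; [apply cpt_const|]. apply cpt_inv.
    + apply cpt_mult; [apply cpt_mult; [apply cpt_const|apply cpt_minus; [apply cpt_const|apply cpt_id]]|].
      apply cpt_sqrt1m; lra.
    + assert (0 < sqrt (1 - x)) by (apply sqrt_lt_R0; lra).
      apply Rgt_not_eq. apply Rmult_lt_0_compat; [|lra]. lra.
  - intros x Hx.
    assert (Hp : 0 < sqrt (1 - x)) by (apply sqrt_lt_R0; lra).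
    assert (Ep : sqrt (1 - x) * sqrt (1 - x) = 1 - x) by (apply sqrt_sqrt; lra).
    assert (D1 : derivable_pt_lim (fun x => 8 * sqrt (1 - x)) x (8 * - / (2 * sqrt (1 - x)))).
    { eapply dpl_val; [apply dpl_mult; [apply dpl_const| apply dpl_sqrt1m; lra]|]. cbv beta; ring. }
    assert (NZ : 8 * sqrt (1 - x) <> 0) by lra.
    eapply dpl_val.
    + apply dpl_mult; [apply dpl_const|]. exact (dpl_inv _ _ _ D1 NZ).
    + cbv beta. field_simplify; [|lra|lra].
      replace (sqrt (1 - x) ^ 3) with (sqrt (1 - x) * sqrt (1 - x) * sqrt (1 - x)) by ring.
      rewrite Ep. field. split; [|split; lra].
      replace (-16 * sqrt (1 - x) * x + 16 * sqrt (1 - x)) with (16 * sqrt (1 - x) * (1 - x)) by ring.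
      apply Rgt_not_eq. apply Rmult_lt_0_compat; lra.
Qed.

Lemma int_T (r : R) (pr : Riemann_integrable (fun s => / (16 * sqrt (1 - s))) 0 r) :
  0 <= r < 1 -> RiemannInt pr <= 1/8 /\ 0 <= RiemannInt pr.
Proof.
  intros Hr.
  rewrite (my_FTC _ (fun s => - / 8 * sqrt (1 - s))); [| lra | |].
  - replace (1 - 0) with 1 by ring. rewrite sqrt_1.
    assert (0 <= sqrt (1 - r)) by apply sqrt_pos.
    assert (sqrt (1 - r) <= 1) by (apply Rle_trans with (sqrt 1); [apply sqrt_le_1_alt; lra|rewrite sqrt_1; lra]).
    split; lra.
  - intros x Hx. apply cpt_inv; [apply cpt_mult; [apply cpt_const|apply cpt_sqrt1m; lra]|].
    assert (0 < sqrt (1 - x)) by (apply sqrt_lt_R0; lra). lra.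
  - intros x Hx.
    assert (Hp : 0 < sqrt (1 - x)) by (apply sqrt_lt_R0; lra).
    eapply dpl_val; [apply dpl_mult; [apply dpl_const|apply dpl_sqrt1m; lra]|].
    cbv beta. field. lra.
Qed.

Lemma int_lin (rho : R) (pr : Riemann_integrable (fun t => t / 40) 0 rho) :
  0 <= rho -> RiemannInt pr = rho * rho / 80.
Proof.
  intros Hr.
  rewrite (my_FTC _ (fun t => t * t / 80)); [field | lra | |].
  - intros; unfold Rdiv; apply cpt_mult; [apply cpt_id|apply cpt_const].
  - intros x _. unfold Rdiv. eapply dpl_val.
    + apply dpl_mult; [apply dpl_mult; apply dpl_id|apply dpl_const].
    + cbv beta; field.
Qed.

Lemma cont_outer x : x < 1 -> continuity_pt (fun x => PI / (16 * (1 - x) * sqrt (1 - x))) x.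
Proof.
  intros Hx. unfold Rdiv. apply cpt_mult; [apply cpt_const|]. apply cpt_inv.
  + apply cpt_mult; [apply cpt_mult; [apply cpt_const|apply cpt_minus; [apply cpt_const|apply cpt_id]]|].
    apply cpt_sqrt1m; lra.
  + assert (0 < sqrt (1 - x)) by (apply sqrt_lt_R0; lra).
    apply Rgt_not_eq. apply Rmult_lt_0_compat; [|lra]. lra.
Qed.

Lemma inner_bound s x : 0 < s < 1 -> - s < x < s ->
  RI (fun y => fsF (x, y) * fsF (x, y)) (- sqrt (s * s - x * x)) (sqrt (s * s - x * x))
  <= PI / (16 * (1 - x) * sqrt (1 - x)).
Proof.
  intros Hs Hx.
  assert (Hw2 : sqrt (s * s - x * x) * sqrt (s * s - x * x) = s * s - x * x)
    by (apply sqrt_sqrt; nra).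
  assert (Hw0 : 0 <= sqrt (s * s - x * x)) by apply sqrt_pos.
  set (w := sqrt (s * s - x * x)) in *. clearbody w.
  assert (Ha : 0 < 1 - x) by lra.
  assert (Hsa : 0 < sqrt (1 - x)) by (apply sqrt_lt_R0; lra).
  assert (pr : Riemann_integrable (fun y => / (16 * ((1 - x) * (1 - x) + y * y) * sqrt (1 - x))) (- w) w).
  { apply continuity_implies_RiemannInt; [lra|]. intros y _.
    apply cpt_inv.
    - apply cpt_mult; [|apply cpt_const]. apply cpt_mult; [apply cpt_const|].
      apply cpt_plus; [apply cpt_const|apply cpt_mult; apply cpt_id].
    - apply Rgt_not_eq. apply Rmult_lt_0_compat; [|lra]. nra. }
  apply Rle_trans with (RiemannInt pr).
  - apply RI_le; [lra| |].
    + intros y Hy.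
      assert (Hd : in_disk (x, y)).
      { unfold in_disk, Cabs, Cnorm2; simpl.
        apply Rlt_le_trans with (sqrt 1); [|rewrite sqrt_1; lra].
        apply sqrt_lt_1_alt. split; nra. }
      pose proof (fs_sq_bound _ Hd) as B. simpl in B. exact B.
    + apply RInt_nonneg; [lra|]. intros y _. left. apply Rinv_0_lt_compat.
      apply Rmult_lt_0_compat; [|lra]. nra.
  - apply (int_atan (1 - x) w pr); lra.
Qed.

Lemma disk_bound s : 0 < s < 1 ->
  disk_integral (fun z => fsF z * fsF z) s <= PI * s / (4 * sqrt (1 - s)).
Proof.
  intros Hs. unfold disk_integral.
  assert (pr : Riemann_integrable (fun x => PI / (16 * (1 - x) * sqrt (1 - x))) (- s) s).
  { apply continuity_implies_RiemannInt; [lra|]. intros x Hx. apply cont_outer; lra. }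
  destruct (int_outer s pr Hs) as [B1 B2].
  apply Rle_trans with (RiemannInt pr); auto.
  apply RI_le; auto; [lra|]. intros x Hx. apply inner_bound; auto.
Qed.

Lemma S_bound s : 0 < s < 1 -> S_char fsF s / s <= / (16 * sqrt (1 - s)).
Proof.
  intros Hs. unfold S_char.
  assert (HPI := PI_RGT_0).
  assert (Hp : 0 < sqrt (1 - s)) by (apply sqrt_lt_R0; lra).
  pose proof (disk_bound s Hs) as B.
  set (D := disk_integral (fun z => fsF z * fsF z) s) in *. clearbody D.
  apply Rle_trans with (/ (4 * PI) * (PI * s / (4 * sqrt (1 - s))) / s).
  - unfold Rdiv. apply Rmult_le_compat_r; [left; apply Rinv_0_lt_compat; lra|].
    apply Rmult_le_compat_l; [left; apply Rinv_0_lt_compat; lra|]. exact B.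
  - right. field. split; lra.
Qed.

Lemma T_bound r : 0 <= r < 1 -> T_char fsF r <= 1/8.
Proof.
  intros Hr. unfold T_char.
  assert (pr : Riemann_integrable (fun s => / (16 * sqrt (1 - s))) 0 r).
  { apply continuity_implies_RiemannInt; [lra|]. intros x Hx.
    apply cpt_inv; [apply cpt_mult; [apply cpt_const|apply cpt_sqrt1m; lra]|].
    assert (0 < sqrt (1 - x)) by (apply sqrt_lt_R0; lra). lra. }
  destruct (int_T r pr Hr) as [B1 B2].
  apply Rle_trans with (RiemannInt pr); auto.
  apply RI_le; auto; [lra|]. intros s Hs. apply S_bound. lra.
Qed.

Lemma tanh_form u : tanh u = (exp u * exp u - 1) / (exp u * exp u + 1).
Proof.
  unfold tanh, sinh, cosh. rewrite exp_Ropp. pose proof (exp_pos u).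
  field. split; [nra|lra].
Qed.

Lemma one_m_tanh u : 1 - tanh u = 2 / (exp u * exp u + 1).
Proof. rewrite tanh_form. pose proof (exp_pos u). field. nra. Qed.

Lemma tanh_lt1 u : tanh u < 1.
Proof.
  pose proof (one_m_tanh u). pose proof (exp_pos u).
  assert (0 < 2 / (exp u * exp u + 1)) by (apply Rdiv_lt_0_compat; nra). lra.
Qed.

Lemma tanh_nonneg u : 0 <= u -> 0 <= tanh u.
Proof.
  intros Hu. rewrite tanh_form. pose proof (exp_ineq1_le u).
  pose proof (exp_pos u). unfold Rdiv. apply Rmult_le_pos; [nra|].
  left; apply Rinv_0_lt_compat; nra.
Qed.

Definition Eint (t : R) : R := (1 + tanh (t / 2)) / (8 * sqrt (sqrt (1 - tanh (t / 2)))).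

Lemma integrand_eq t : 0 <= t -> normHS fsF (gamma 0 t) = Eint t.
Proof.
  intros Ht. unfold normHS, gamma, Eint. rewrite cos_0, sin_0, Rmult_1_r, Rmult_0_r.
  pose proof (tanh_lt1 (t / 2)).
  rewrite fs_radius by (simpl; auto).
  unfold Cnorm2; simpl.
  assert (H1 : 0 < sqrt (1 - tanh (t / 2))) by (apply sqrt_lt_R0; lra).
  assert (H2 : 0 < sqrt (sqrt (1 - tanh (t / 2)))) by (apply sqrt_lt_R0; lra).
  field. split; lra.
Qed.

Lemma cont_tanh u : continuity_pt tanh u.
Proof.
  unfold tanh. unfold Rdiv.
  assert (Hc : 0 < cosh u) by (unfold cosh; pose proof (exp_pos u); pose proof (exp_pos (-u)); lra).
  apply cpt_mult.
  - apply derivable_continuous_pt, derivable_pt_sinh.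
  - apply cpt_inv; [apply derivable_continuous_pt, derivable_pt_cosh|lra].
Qed.

Lemma cont_Eint t : continuity_pt Eint t.
Proof.
  unfold Eint, Rdiv.
  assert (Ct : continuity_pt (fun t => tanh (t * / 2)) t).
  { apply (cpt_comp (fun t => t * / 2) tanh); [apply cpt_mult; [apply cpt_id|apply cpt_const]|].
    apply cont_tanh. }
  pose proof (tanh_lt1 (t * / 2)).
  assert (H1 : 0 < sqrt (1 - tanh (t * / 2))) by (apply sqrt_lt_R0; lra).
  assert (H2 : 0 < sqrt (sqrt (1 - tanh (t * / 2)))) by (apply sqrt_lt_R0; lra).
  apply cpt_mult; [apply cpt_plus; [apply cpt_const|exact Ct]|].
  apply cpt_inv; [|lra].
  apply cpt_mult; [apply cpt_const|].
  apply cpt_sqrt; [|lra]. apply cpt_sqrt; [|lra].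
  apply cpt_minus; [apply cpt_const|exact Ct].
Qed.

Lemma Eint_lb t : 0 <= t -> t / 40 <= Eint t.
Proof.
  intros Ht. unfold Eint.
  pose proof (tanh_nonneg (t / 2) ltac:(lra)) as T0.
  pose proof (tanh_lt1 (t / 2)) as T1.
  pose proof (one_m_tanh (t / 2)) as T2.
  assert (HP : exp (t / 4) * exp (t / 4) = exp (t / 2)).
  { rewrite <- exp_plus. f_equal. field. }
  pose proof (exp_ineq1_le (t / 4)) as E4.
  assert (HPt : t * t / 16 <= exp (t / 2)).
  { rewrite <- HP. assert (0 <= t / 4) by lra. nra. }
  set (x := tanh (t / 2)) in *. set (P := exp (t / 2)) in *.
  clearbody x P.
  assert (H1 : 0 < sqrt (1 - x)) by (apply sqrt_lt_R0; lra).
  assert (H2 : 0 < sqrt (sqrt (1 - x))) by (apply sqrt_lt_R0; lra).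
  assert (E1 : sqrt (1 - x) * sqrt (1 - x) = 1 - x) by (apply sqrt_sqrt; lra).
  assert (E2 : sqrt (sqrt (1 - x)) * sqrt (sqrt (1 - x)) = sqrt (1 - x)) by (apply sqrt_sqrt; lra).
  set (q := sqrt (sqrt (1 - x))) in *. set (p := sqrt (1 - x)) in *. clearbody q p.
  assert (Hq4 : (q * q) * (q * q) = 1 - x) by (rewrite E2; auto).
  assert (HP0 : 0 <= P) by nra.
  assert (Hm : (1 - x) * (P * P + 1) = 2) by (rewrite T2; field; nra).
  assert (Hm2 : (1 - x) * (P * P) <= 2) by nra.
  assert (Htt : (t * t / 16) * (t * t / 16) <= P * P) by (apply Rmult_le_compat; nra).
  assert (Hqt : (q * t) * (q * t) * ((q * t) * (q * t)) <= 512).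
  { assert ((1 - x) * ((t * t / 16) * (t * t / 16)) <= 2).
    { apply Rle_trans with ((1 - x) * (P * P)); auto. apply Rmult_le_compat_l; lra. }
    replace ((q * t) * (q * t) * ((q * t) * (q * t))) with (((q * q) * (q * q)) * (t * t * t * t)) by ring.
    rewrite Hq4. nra. }
  assert (Hq5 : q * t <= 5).
  { destruct (Rle_dec (q * t) 5) as [|Hn]; auto. exfalso.
    assert (25 < (q * t) * (q * t)) by nra. nra. }
  replace (t / 40) with ((t / 40 * (8 * q)) * / (8 * q)) by (field; lra).
  unfold Rdiv at 2. apply Rmult_le_compat_r; [left; apply Rinv_0_lt_compat; lra|].
  nra.
Qed.

Lemma LS_lb rho : 0 < rho -> rho * rho / 80 <= L_S fsF 0 rho.
Proof.
  intros Hr. unfold L_S.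
  assert (prE : Riemann_integrable Eint 0 rho).
  { apply continuity_implies_RiemannInt; [lra|]. intros; apply cont_Eint. }
  assert (prh : Riemann_integrable (fun t => normHS fsF (gamma 0 t)) 0 rho).
  { refine (@Riemann_integrable_ext Eint _ 0 rho _ prE).
    intros x Hx. rewrite Rmin_left, Rmax_right in Hx by lra.
    symmetry. apply integrand_eq. lra. }
  assert (prg : Riemann_integrable (fun t => t / 40) 0 rho).
  { apply continuity_implies_RiemannInt; [lra|]. intros.
    unfold Rdiv; apply cpt_mult; [apply cpt_id|apply cpt_const]. }
  rewrite <- (int_lin rho prg) by lra.
  apply (RI_ge _ _ _ _ prh prg); [lra|].
  intros t Ht. rewrite integrand_eq by lra. apply Eint_lb. lra.
Qed.

Theorem mainTheorem13 :
  exists (f : CC -> Csph) (fs : CC -> R) (theta : R),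
    meromorphic_on_disk f /\
    (forall z, in_disk z -> sph_deriv f z (fs z)) /\
    (exists M, forall r, 0 <= r < 1 -> T_char fs r <= M) /\
    (forall K, exists R0, forall rho0, R0 < rho0 -> L_S fs theta rho0 / rho0 > K).
Proof.
  exists fF, fsF, 0.
  split; [exact merom|].
  split; [exact sphF|].
  split; [exists (1/8); exact T_bound|].
  intros K. exists (80 * Rabs K + 1). intros rho Hr.
  pose proof (Rabs_pos K). pose proof (Rle_abs K).
  assert (Hr0 : 0 < rho) by lra.
  pose proof (LS_lb rho Hr0) as B.
  unfold Rgt. apply Rlt_le_trans with (rho / 80); [lra|].
  replace (rho / 80) with ((rho * rho / 80) * / rho) by (field; lra).
  unfold Rdiv at 2. apply Rmult_le_compat_r; [left; apply Rinv_0_lt_compat; lra|exact B].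
Qed.
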